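(* Let $V$ be a reflexive Banach space, $1<p<\infty$, and let $g\in L^p_b(\mathbb R,V)$ be time regular, or space regular, or normal. Then $g$ is weakly normal.
   Context: $L^p_b(\mathbb R,V)$ has norm $\sup_{s}\|g\|_{L^p((s,s+1),V)}$. Time regular: for every $\varepsilon>0$ there is $g_\varepsilon\in C^k_b(\mathbb R,V)$ for all $k$ with $\|g-g_\varepsilon\|_{L^p_b(\mathbb R,V)}\le\varepsilon$. Space regular: for every $\varepsilon>0$ there are a finite-dimensional $V_\varepsilon\subset V$ and $g_\varepsilon\in L^p_b(\mathbb R,V_\varepsilon)$ with $\|g-g_\varepsilon\|_{L^p_b(\mathbb R,V)}\le\varepsilon$. Normal: $\sup_{t\in\mathbb R}\int_t^{t+\tau}\|g(s)\|_V^p\,ds\to0$ as $\tau\to0$. Weakly normal: for every $\varepsilon>0$ there exist $\tau=\tau(\varepsilon)>0$, a finite-dimensional subspace $V_\varepsilon\subset V$ and $g_\varepsilon\in L^p_b(\mathbb R,V_\varepsilon)$ such that $\sup_{t\in\mathbb R}\int_t^{t+\tau}\|g(s)-g_\varepsilon(s)\|_V^p\,ds\le\varepsilon$. *)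

(* Defs.v *)
From HB Require Import structures.
From mathcomp Require Import all_boot all_order all_algebra.
From mathcomp Require Import all_classical all_reals all_analysis.
Set Implicit Arguments. Unset Strict Implicit. Unset Printing Implicit Defensive.
Import Order.TTheory GRing.Theory Num.Theory.
Import numFieldNormedType.Exports.
Local Open Scope classical_set_scope.
Local Open Scope ring_scope.

Section Defs.
Context {R : realType} {V : normedModType R}.

Local Notation mu := (@lebesgue_measure R).

Definition dual_elt (f : V -> R) : Prop :=
  (forall (a : R) (u v : V), f (a *: u + v) = a * f u + f v) /\
  (exists M : R, forall v, `|f v| <= M * `|v|).

(* V is reflexive: every bounded linear functional on V^* (with the dual
   (operator) norm) is evaluation at some point of V *)
Definition reflexive_space : Prop :=
  forall Phi : (V -> R) -> R,
    (forall (a : R) (f h : V -> R), dual_elt f -> dual_elt h ->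
       Phi (fun x => a * f x + h x) = a * Phi f + Phi h) ->
    (exists C : R, forall (f : V -> R) (M : R), dual_elt f -> 0 <= M ->
       (forall v, `|f v| <= M * `|v|) -> `|Phi f| <= C * M) ->
    exists v : V, forall f, dual_elt f -> Phi f = f v.

Definition V_simple_fun (h : R -> V) : Prop :=
  finite_set (range h) /\ forall v : V, measurable (h @^-1` [set v]).

Definition strongly_measurable (g : R -> V) : Prop :=
  exists u : nat -> R -> V, (forall n, V_simple_fun (u n)) /\
    {ae mu, forall t, (fun n => u n t) @ \oo --> g t}.

Definition loc_int (p : R) (g : R -> V) (t tau : R) : \bar R :=
  \int[mu]_(s in `]t, (t + tau)%R[) ((`|g s| `^ p)%:E).

Definition Lpb (p : R) (g : R -> V) : Prop :=
  strongly_measurable g /\ exists M : R, forall t, (loc_int p g t 1 <= M%:E)%E.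

(* ||f - h||_{L^p_b(R,V)} <= eps, i.e. sup_s ||f - h||_{L^p((s,s+1),V)} <= eps *)
Definition Lpb_dist_le (p : R) (f h : R -> V) (eps : R) : Prop :=
  forall s, (loc_int p (fun x => (f x - h x)%R) s 1 <= (eps `^ p)%:E)%E.

Definition Cinf_b (h : R -> V) : Prop :=
  forall k : nat,
    (forall x, derivable (derive1n k h) x 1) /\
    continuous (derive1n k h) /\
    exists M : R, forall x, `|derive1n k h x| <= M.

Definition fin_dim_valued (h : R -> V) : Prop :=
  exists (n : nat) (e : 'I_n -> V), forall t, exists c : 'I_n -> R,
    h t = \sum_(i < n) c i *: e i.

Definition time_regular (p : R) (g : R -> V) : Prop :=
  forall eps : R, 0 < eps -> exists h : R -> V,
    Cinf_b h /\ Lpb_dist_le p g h eps.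

Definition space_regular (p : R) (g : R -> V) : Prop :=
  forall eps : R, 0 < eps -> exists h : R -> V,
    fin_dim_valued h /\ Lpb p h /\ Lpb_dist_le p g h eps.

Definition Lpb_normal (p : R) (g : R -> V) : Prop :=
  forall eps : R, 0 < eps -> exists delta : R, 0 < delta /\
    forall tau, 0 < tau -> tau < delta -> forall t, (loc_int p g t tau <= eps%:E)%E.

Definition weakly_normal (p : R) (g : R -> V) : Prop :=
  forall eps : R, 0 < eps -> exists tau : R, 0 < tau /\ exists h : R -> V,
    fin_dim_valued h /\ Lpb p h /\
    forall t, (loc_int p (fun x => (g x - h x)%R) t tau <= eps%:E)%E.

End Defs.

(* Main.v *)
Require Import Defs.
From HB Require Import structures.
From mathcomp Require Import all_boot all_order all_algebra.
From mathcomp Require Import all_classical all_reals all_analysis.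
From mathcomp Require Import ereal measure lebesgue_measure measurable_realfun.
From mathcomp Require Import ring lra.
Import Order.TTheory GRing.Theory Num.Theory.
Import numFieldNormedType.Exports.
Local Open Scope classical_set_scope.
Local Open Scope ring_scope.

Section Lower.
Local Open Scope ereal_scope.
Context d (T : measurableType d) (R : realType) (mu : {measure set T -> \bar R}).

Lemma le_int_nm (D : set T) (f1 f2 : T -> \bar R) :
  (forall x, D x -> 0 <= f1 x) -> (forall x, D x -> f1 x <= f2 x) ->
  \int[mu]_(x in D) f1 x <= \int[mu]_(x in D) f2 x.
Proof.
move=> f10 f12.
have f20 x : D x -> 0 <= f2 x by move=> Dx; exact: le_trans (f10 _ Dx) (f12 _ Dx).
rewrite !ge0_integralE //.
apply: ge_ereal_sup => _ [h hf <-]; apply: ereal_sup_ubound; exists h => // x.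
apply: le_trans (hf x) _; rewrite /patch; case: ifP => // /set_mem; exact: f12.
Qed.

Import HBNNSimple.
Lemma le_int_affine (D : set T) (mD : measurable D) (f A : T -> \bar R) (a c : R) :
  (0 < a)%R -> (0 <= c)%R ->
  (forall x, D x -> 0 <= f x) -> (forall x, D x -> 0 <= A x) ->
  (forall x, D x -> f x <= a%:E * A x + c%:E) ->
  \int[mu]_(x in D) f x <= a%:E * \int[mu]_(x in D) A x + c%:E * mu D.
Proof.
move=> a0 c0 f0 A0 fA.
rewrite [X in X <= _]ge0_integralE //.
apply: ge_ereal_sup => _ [h hf <-].
have hD x : ~ D x -> h x = 0%R.
  move=> nDx; have := hf x; rewrite /patch; case: ifP => [/set_mem//|_].
  rewrite lee_fin => h0; apply/eqP; rewrite eq_le h0 /=; exact: fun_ge0.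
have -> : sintegral mu h = (\int[mu]_(x in D) (h x)%:E).
  rewrite integral_nnsfun //; apply: eq_sintegral => x /=; apply/esym.
  rewrite /patch; case: ifP => // /negbT; rewrite notin_setE => /hD ->//.
have mh : measurable_fun D (EFin \o h).
  by apply/measurable_EFinP; apply: measurable_funS (measurable_funPT h).
pose k x := Num.max (h x - c)%R 0%R.
have mk : measurable_fun D k.
  apply: measurable_maxr; last exact: measurable_cst.
  apply: measurable_funB; last exact: measurable_cst.
  exact: measurable_funS (measurable_funPT h).
have k0 x : (0 <= k x)%R by rewrite /k le_max lexx orbT.
apply: (@le_trans _ _ (\int[mu]_(x in D) ((k x)%:E + c%:E))).
  apply: ge0_le_integral => //.
  - by move=> x _; rewrite lee_fin fun_ge0.
  - under eq_fun do rewrite -EFinD.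
    by apply/measurable_EFinP; apply: measurable_funD => //; exact: measurable_cst.
  - move=> x Dx; rewrite -EFinD lee_fin /k -lerBlDr le_max lexx //.
rewrite (@ge0_integralD _ _ _ mu D mD (EFin \o k) (cst c%:E)) //; try (by move=> x _; rewrite /= lee_fin); try exact/measurable_EFinP.
rewrite integral_cst //; apply: leeD2r.
have -> : \int[mu]_(x in D) (k x)%:E = a%:E * \int[mu]_(x in D) ((k x / a)%R)%:E.
  rewrite -ge0_integralZl //; last 3 first.
  - by apply/measurable_EFinP; apply: measurable_funM => //; exact: measurable_cst.
  - by move=> x _; rewrite lee_fin divr_ge0 // ltW.
  - by rewrite lee_fin ltW.
  apply: eq_integral => x _; rewrite -EFinM; congr EFin.
  by rewrite mulrC divfK // gt_eqF.
apply: lee_wpmul2l; first by rewrite lee_fin ltW.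
apply: le_int_nm; first by move=> x _; rewrite lee_fin divr_ge0 // ltW.
move=> x Dx; have := fA x Dx; have := A0 x Dx; have := hf x.
rewrite /patch mem_set //.
case: (A x) => [r| |] //=; last by move=> *; rewrite leey.
move=> hfx; rewrite lee_fin => r0 fle.
have : (h x)%:E <= (a * r + c)%:E by rewrite EFinD EFinM; exact: le_trans hfx fle.
rewrite lee_fin => hle; rewrite lee_fin ler_pdivrMr // /k ge_max; apply/andP; split.
  by rewrite lerBlDr mulrC.
by rewrite mulr_ge0 // ltW.
Qed.
End Lower.

Section Main.
Context {R : realType} {V : normedModType R}.
Local Notation mu := (@lebesgue_measure R).

Lemma loc_int_ge0 p (f : R -> V) t tau : (0 <= loc_int p f t tau)%E.
Proof. by apply: integral_ge0 => x _; rewrite lee_fin powR_ge0. Qed.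

Lemma loc_int_mono p (f : R -> V) t tau tau' : tau <= tau' ->
  (loc_int p f t tau <= loc_int p f t tau')%E.
Proof.
move=> tt; rewrite /loc_int integral_mkcond [X in (_ <= X)%E]integral_mkcond.
apply: le_int_nm => x _; rewrite /patch.
  by case: ifP => _ //; rewrite lee_fin powR_ge0.
case: ifP => xin; last by case: ifP => _ //; rewrite lee_fin powR_ge0.
rewrite ifT //; move: xin; rewrite !inE /= !in_itv /= => /andP[-> /= xl].
by apply: lt_le_trans xl _; rewrite lerD2l.
Qed.

Lemma pow_split (p x y M : R) : 0 <= p -> 0 <= x -> 0 <= y -> 0 <= M ->
  x <= y + M -> x `^ p <= 2 `^ p * y `^ p + (2 * M) `^ p.
Proof.
move=> p0 x0 y0 M0 xyM.
have h1 : x `^ p <= (y + M) `^ p.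
  by apply: ge0_ler_powR => //; rewrite nnegrE // addr_ge0.
apply: le_trans h1 _.
have [yM|My] := leP y M.
  apply: le_trans (_ : (2 * M) `^ p <= _); last first.
    by rewrite lerDr mulr_ge0 // powR_ge0.
  by apply: ge0_ler_powR => //; rewrite ?nnegrE ?addr_ge0 ?mulr_ge0 //; lra.
apply: le_trans (_ : 2 `^ p * y `^ p <= _); last by rewrite lerDl powR_ge0.
rewrite -powRM //; apply: ge0_ler_powR => //; rewrite ?nnegrE ?addr_ge0 ?mulr_ge0 //; lra.
Qed.

Lemma zero_fin : fin_dim_valued (fun _ : R => (0 : V)).
Proof. by exists 0%N, (fun _ => 0) => t; exists (fun _ => 0); rewrite big_ord0. Qed.

Lemma zero_Lpb p : 0 < p -> Lpb p (fun _ : R => (0 : V)).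
Proof.
move=> p0; split.
  exists (fun _ _ => 0); split.
    move=> n; split.
      rewrite (_ : range _ = [set 0]); first exact: finite_set1.
      by apply/seteqP; split => [_ [x _ <-]//|_ ->]; exists 0.
    move=> v; rewrite /preimage.
    have [->|v0] := eqVneq v 0.
      by rewrite (_ : [set _ | _] = setT) //; apply/seteqP; split.
    rewrite (_ : [set _ | _] = set0) //; apply/seteqP; split => // x /= /esym/eqP.
    by rewrite (negbTE v0).
  by apply: aeW => t; exact: cvg_cst.
exists 0 => t; rewrite /loc_int normr0 powR0 ?gt_eqF // integral0 //.
Qed.

End Main.

Lemma powRinvK (R : realType) (x p : R) : 0 <= x -> p != 0 -> (x `^ p^-1) `^ p = x.
Proof. by move=> x0 p0; rewrite -powRrM mulVf // powRr1. Qed.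

Lemma leb_itv (R : realType) (t tau : R) : 0 < tau ->
  (@lebesgue_measure R `]t, (t + tau)%R[ = tau%:E)%E.
Proof.
move=> tau0; rewrite lebesgue_measure_itv /= ifT; last by rewrite lte_fin ltrDl.
by rewrite -EFinB addrAC subrr add0r.
Qed.

Theorem proposition2p14 (R : realType) (V : completeNormedModType R)
  (p : R) (g : R -> V) :
  @reflexive_space R V -> 1 < p ->
  Lpb p g ->
  (time_regular p g \/ space_regular p g \/ Lpb_normal p g) ->
  weakly_normal p g.
Proof.
move=> _ p1 _ H eps eps0.
have p0 : 0 < p by apply: lt_trans p1; rewrite ltr01.
have pne0 : p != 0 by rewrite gt_eqF.
case: H => [TR|[SR|NR]].
-
  have twop0 : 0 < 2 `^ p by apply: powR_gt0.
  pose e1 := (eps / (2 * 2 `^ p)) `^ p^-1.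
  have e10 : 0 < e1 by apply: powR_gt0; apply: divr_gt0 => //; rewrite mulr_gt0.
  have [h1 [Ch1 dist]] := TR e1 e10.
  have [_ [_ [M hM]]] := Ch1 0%N.
  rewrite derive1n0 in hM.
  have M0 : 0 <= M by apply: le_trans (hM 0); rewrite normr_ge0.
  pose c := (2 * M) `^ p.
  have c0 : 0 <= c by apply: powR_ge0.
  pose tau := Num.min 1 (eps / (2 * (c + 1))).
  have tau0 : 0 < tau.
    by rewrite lt_min ltr01 /= divr_gt0 // mulr_gt0 // ltr_pwDr.
  exists tau; split => //; exists (fun _ => 0); split; first exact: zero_fin.
  split; first exact: zero_Lpb.
  move=> t.
  have -> : (fun x => g x - 0) = g by apply/funext => x; rewrite subr0.
  apply: le_trans (@le_int_affine _ _ _ (@lebesgue_measure R) _ (measurable_itv _)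
     (fun s => (`|g s| `^ p)%:E) (fun s => (`|g s - h1 s| `^ p)%:E) (2 `^ p) c
     twop0 c0 _ _ _) _.
  + by move=> x _; rewrite lee_fin powR_ge0.
  + by move=> x _; rewrite lee_fin powR_ge0.
  + move=> x _; rewrite -EFinM -EFinD lee_fin; apply: pow_split => //; first exact: ltW.
    apply: le_trans (_ : `|g x - h1 x| + `|h1 x| <= _); last by rewrite lerD2l.
    by apply: le_trans (ler_normD _ _); rewrite subrK.
  set m := (X in (c%:E * X)%E); have -> : m = tau%:E by rewrite /m; exact: leb_itv.
  apply: le_trans (_ : (2 `^ p)%:E * (eps / (2 * 2 `^ p))%:E + c%:E * tau%:E <= _)%E.
    apply: leeD2r; apply: lee_wpmul2l; first by rewrite lee_fin ltW.
    have tau1 : tau <= 1 by rewrite /tau ge_min lexx.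
    have L1 : (loc_int p (fun x => (g x - h1 x)%R) t tau <= (eps / (2 * 2 `^ p))%:E)%E.
      apply: le_trans (@loc_int_mono R V p (fun x => (g x - h1 x)%R) t tau 1 tau1) _.
      rewrite -(@powRinvK R (eps / (2 * 2 `^ p)) p) //. by rewrite divr_ge0 ?mulr_ge0 // ltW.
    exact: L1.
  rewrite -!EFinM -EFinD lee_fin.
  have tau2 : tau <= eps / (2 * (c + 1)) by rewrite /tau ge_min lexx orbT.
  have -> : 2 `^ p * (eps / (2 * 2 `^ p)) = eps / 2.
    by field; rewrite gt_eqF.
  have : c * tau <= c * (eps / (2 * (c + 1))) by rewrite ler_wpM2l.
  have : c * (eps / (2 * (c + 1))) = eps / 2 * (c / (c + 1)).
    by field; rewrite gt_eqF // ltr_pwDr.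
  have : c / (c + 1) <= 1 by rewrite ler_pdivrMr ?ltr_pwDr // mul1r lerDl.
  move=> h1' h2 h3; rewrite h2 in h3.
  have : eps / 2 * (c / (c + 1)) <= eps / 2 by rewrite ler_piMr // divr_ge0 // ltW.
  lra.
-
  have e10 : 0 < eps `^ p^-1 by apply: powR_gt0.
  have [h [fh [Lh dist]]] := SR _ e10.
  exists 1; split; first exact: ltr01.
  exists h; split => //; split => // t.
  by rewrite -(@powRinvK R eps p) //; exact: ltW.
- have [delta [d0 Hd]] := NR eps eps0.
  exists (delta / 2); split; first by rewrite divr_gt0.
  exists (fun _ => 0); split; first exact: zero_fin.
  split; first exact: zero_Lpb.
  move=> t.
  have -> : (fun x => (g x - 0)%R) = g by apply/funext => x; rewrite subr0.
  apply: Hd; rewrite ?divr_gt0 //; lra.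
Qed.
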